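(* Let $\delta < \lambda$ be regular cardinals with $\lambda > \delta^+$, $\delta$ inaccessible, and $\lambda$ either inaccessible or the successor of a cardinal of cofinality $> \delta$. Then $\mathcal{K}(\delta,\lambda)$ satisfies the $\delta^{++}$-chain condition whenever $2^\delta = \delta^+$.
   Context: For regular $\kappa_0\le\kappa_1$, $\mathcal{K}(\kappa_0,\kappa_1)$ is the set of triples $\langle w,\alpha,\bar r\rangle$ with $w\subseteq\kappa_1$, $|w|=\kappa_0$, $\alpha<\kappa_0$, and $\bar r=\langle r_i:i\in w\rangle$ a sequence of functions from $\alpha$ to $\{0,1\}$, ordered by $\langle w^1,\alpha^1,\bar r^1\rangle\le\langle w^2,\alpha^2,\bar r^2\rangle$ iff $w^1\subseteq w^2$, $\alpha^1\le\alpha^2$, $r^1_i\subseteq r^2_i$ for $i\in w^1$, and $|\{i\in w^1: r^2_i\restriction(\alpha^2-\alpha^1)\text{ is not constantly }0\}|<\kappa_0$. *)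

(* Defs.v *)
(* cardinals are handled relationally through the
   library's cardinality comparisons [A #<= B] and [A #= B] on classical sets. *)
From HB Require Import structures.
From mathcomp Require Import all_boot all_order all_algebra.
From mathcomp Require Import boolp classical_sets functions cardinality.

Set Implicit Arguments.
Unset Strict Implicit.
Unset Printing Implicit Defensive.

Local Open Scope classical_set_scope.
Local Open Scope card_scope.

Definition card_lt T U (A : set T) (B : set U) := A #<= B /\ ~ (B #<= A).

Definition is_succ_card T U (K : set T) (S : set U) :=
  card_lt K S /\ forall Z : set U, Z `<=` S -> card_lt Z S -> Z #<= K.

Definition cf_gt T U (X : set T) (Y : set U) :=
  infinite_set X /\
  forall F : U -> set T, (forall u, Y u -> card_lt (F u) X) ->
    ~ (X `<=` \bigcup_(u in Y) F u).

Definition regular_card T (X : set T) :=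
  infinite_set X /\ forall J : set T, card_lt J X -> cf_gt X J.

Definition strong_limit T (X : set T) :=
  forall Z : set T, card_lt Z X -> card_lt [set Y : set T | Y `<=` Z] X.

Definition inaccessible T (X : set T) :=
  ~ countable X /\ regular_card X /\ strong_limit X.

(** [lt] is a strict well-order on D whose order type is the initial ordinal
    |D| (every proper initial segment has cardinality < |D|).  Elements of D
    are thus exactly the ordinals < kappa0 = |D|. *)
Definition initial_wo (D : Type) (lt : D -> D -> Prop) :=
  [/\ well_founded lt,
      (forall a, ~ lt a a),
      (forall a b c, lt a b -> lt b c -> lt a c),
      (forall a b, [\/ lt a b, a = b | lt b a])
    & forall a : D, card_lt [set b | lt b a] [set: D]].

(** Conditions of K(kappa0, kappa1), with kappa0 = |D| (ordinals ordered by
    [lt]) and kappa1 = |L|.  A condition <w, alpha, (r_i)_{i in w}> is stored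
    as a triple where [r i] is only relevant for [i \in w] and on the
    ordinals [beta < alpha] (its values elsewhere are irrelevant). *)
Record Kcond (D L : Type) := MkK {
  Kw : set L;
  Kalpha : D;
  Kr : L -> D -> bool }.

Definition Kcond_ok (D L : Type) (p : Kcond D L) :=
  Kw p #= [set: D].

Definition Kle (D L : Type) (lt : D -> D -> Prop) (p q : Kcond D L) :=
  [/\ Kw p `<=` Kw q,
      lt (Kalpha p) (Kalpha q) \/ Kalpha p = Kalpha q,
      (forall i, Kw p i -> forall beta, lt beta (Kalpha p) ->
          Kr p i beta = Kr q i beta)
    & card_lt
        [set i | Kw p i /\ exists beta,
            ~ lt beta (Kalpha p) /\ lt beta (Kalpha q) /\ Kr q i beta = true]
        [set: D]].

Definition Kcompat (D L : Type) (lt : D -> D -> Prop) (p q : Kcond D L) :=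
  exists s, Kcond_ok s /\ Kle lt p s /\ Kle lt q s.

Definition Kantichain (D L : Type) (lt : D -> D -> Prop) (A : set (Kcond D L)) :=
  (forall p, A p -> Kcond_ok p) /\
  forall p q, A p -> A q -> p <> q -> ~ Kcompat lt p q.

(* Main.v *)
Require Import Defs.
From HB Require Import structures.
From mathcomp Require Import all_boot all_order all_algebra.
From mathcomp Require Import boolp classical_sets functions cardinality.
From mathcomp Require Import wochoice.
From Stdlib Require Import ClassicalEpsilon FunctionalExtensionality.
Local Open Scope classical_set_scope.
Local Open Scope card_scope.

Set Implicit Arguments.
Unset Strict Implicit.

Lemma le_of T U (A : set T) (B : set U) (f : T -> U) :
  (forall x, A x -> B (f x)) -> (forall x y, A x -> A y -> f x = f y -> x = y) ->
  A #<= B.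
Proof.
move=> fAB finj.
elim/Ppointed: U => U in B f fAB finj *.
  case: (pselect (exists x, A x)) => [[x /fAB]|nA]; first by case: (no (f x)).
  have -> : A = set0 by apply/seteqP; split => // x Ax; apply: nA; exists x.
  exact: card_ge0.
apply/pcard_leP. apply/injfunPex. exists f => //.
by move=> x y /set_mem Ax /set_mem Ay; apply: finj.
Qed.

Lemma le_inv T U (A : set T) (B : set U) : A #<= B -> U ->
  exists f : T -> U, (forall x, A x -> B (f x)) /\ (forall x y, A x -> A y -> f x = f y -> x = y).
Proof.
move=> + u; elim/Ppointed: U => U in B u *; first by case: (no u).
move=> /pcard_leP /injfunPex [f fm fi]; exists f; split => //.
by move=> x y Ax Ay; apply: fi; apply/mem_set.
Qed.

Lemma le_ne T U (A : set T) (B : set U) x : A #<= B -> A x -> exists u, B u.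
Proof.
move=> AB Ax; apply: contrapT => nB.
have B0 : B = set0 by apply/seteqP; split=> // u Bu; apply: nB; exists u.
by move: AB; rewrite B0 => /card_le0P A0; rewrite A0 in Ax.
Qed.

Lemma lt_le_trans T U V (A : set T) (B : set U) (C : set V) :
  card_lt A B -> B #<= C -> card_lt A C.
Proof.
move=> [AB nBA] BC; split; first exact: card_le_trans AB BC.
by move=> CA; apply: nBA; apply: card_le_trans BC CA.
Qed.

Lemma le_lt_trans T U V (A : set T) (B : set U) (C : set V) :
  A #<= B -> card_lt B C -> card_lt A C.
Proof.
move=> AB [BC nCB]; split; first exact: card_le_trans AB BC.
by move=> CA; apply: nCB; apply: card_le_trans CA AB.
Qed.

Lemma setX_le T1 T2 U1 U2 (A1 : set T1) (A2 : set T2) (B1 : set U1) (B2 : set U2) :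
  A1 #<= B1 -> A2 #<= B2 -> A1 `*` A2 #<= B1 `*` B2.
Proof.
move=> h1 h2.
case: (pselect (exists z, (A1 `*` A2) z)) => [[[x1 x2] [/= a1 a2]]|nA]; last first.
  have -> : A1 `*` A2 = set0 by apply/seteqP; split => // z Az; apply: nA; exists z.
  exact: card_ge0.
have [u1 _] := le_ne h1 a1; have [u2 _] := le_ne h2 a2.
have [f1 [f1m f1i]] := le_inv h1 u1; have [f2 [f2m f2i]] := le_inv h2 u2.
apply: (@le_of _ _ _ _ (fun z => (f1 z.1, f2 z.2))).
  by move=> [y1 y2] [/= b1 b2]; split; [exact: f1m | exact: f2m].
move=> [y1 y2] [z1 z2] [/= b1 b2] [/= c1 c2] [e1 e2].
by rewrite (f1i _ _ b1 c1 e1) (f2i _ _ b2 c2 e2).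
Qed.

Lemma bigcup_le T I U (J : set I) (F : I -> set T) (B : set U) :
  (forall i, J i -> F i #<= B) -> \bigcup_(i in J) F i #<= J `*` B.
Proof.
move=> FB.
case: (pselect (exists x, (\bigcup_(i in J) F i) x)) => [[x0 [i0 Ji0 Fx0]]|nA]; last first.
  have -> : \bigcup_(i in J) F i = set0.
    by apply/seteqP; split => // z Az; apply: nA; exists z.
  exact: card_ge0.
have [u0 _] := le_ne (FB _ Ji0) Fx0.
pose ix x := epsilon (inhabits i0) (fun i => J i /\ F i x).
pose g i := epsilon (inhabits (fun _ : T => u0))
  (fun g => (forall x, F i x -> B (g x)) /\ (forall x y, F i x -> F i y -> g x = g y -> x = y)).
have ixP x : (\bigcup_(i in J) F i) x -> J (ix x) /\ F (ix x) x.
  move=> [i Ji Fi].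
  exact: (epsilon_spec (inhabits i0) (fun i => J i /\ F i x) (ex_intro _ i (conj Ji Fi))).
have gP i : J i -> (forall x, F i x -> B (g i x)) /\ (forall x y, F i x -> F i y -> g i x = g i y -> x = y).
  move=> Ji; exact: (epsilon_spec (inhabits (fun _ : T => u0))
  (fun g => (forall x, F i x -> B (g x)) /\ (forall x y, F i x -> F i y -> g x = g y -> x = y))
  (le_inv (FB _ Ji) u0)).
apply: (@le_of _ _ _ _ (fun x => (ix x, g (ix x) x))).
  move=> x /ixP [Jx Fx]; split => //=; exact: (gP _ Jx).1.
move=> x y /ixP [Jx Fx] /ixP [Jy Fy] [e1 e2].
rewrite -e1 in Fy e2; exact: (gP _ Jx).2 _ _ Fx Fy e2.
Qed.

Lemma pow_le T U (A : set T) (B : set U) :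
  A #<= B -> [set X : set T | X `<=` A] #<= [set Y : set U | Y `<=` B].
Proof.
move=> AB.
case: (pselect (exists x, A x)) => [[x0 Ax0]|nA].
  have [u0 _] := le_ne AB Ax0.
  have [f [fm fi]] := le_inv AB u0.
  apply: (@le_of _ _ _ _ (fun X => f @` X)).
    by move=> X XA /= _ [x Xx <-]; apply: fm; apply: XA.
  move=> X Y XA YA e; apply/seteqP; split => x Xx.
    have : (f @` Y) (f x) by rewrite -e; exists x.
    by case=> y Yy /fi <- //; [apply: YA | apply: XA].
  have : (f @` X) (f x) by rewrite e; exists x.
  by case=> y Yy /fi <- //; [apply: XA | apply: YA].
apply: (@le_of _ _ _ _ (fun _ => set0)); first by move=> X _ /= u.
move=> X Y XA YA _; apply/seteqP; split => x Xx.
  by case: nA; exists x; apply: XA.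
by case: nA; exists x; apply: YA.
Qed.

Lemma kur T (Q : set T) :
  Q `*` Q #<= [set Z : set (set T) | Z `<=` [set Y | Y `<=` Q]].
Proof.
apply: (@le_of _ _ _ _ (fun z => [set [set z.1]; [set z.1; z.2]])).
  move=> [x y] [/= Qx Qy] S [->|->] t /=; first by move=> ->.
  by case=> ->.
have memK (S : set (set T)) (a : set T) b : S = [set a; b] -> S a.
  by move=> ->; left.
have memK2 (S : set (set T)) (a : set T) b : S = [set a; b] -> S b.
  by move=> ->; right.
have eqs (a b : set T) z : a = b -> a z -> b z by move=> ->.
move=> [x y] [x' y'] _ _ /= E.
have hx : x = x'.
  have := memK _ _ _ (esym E); rewrite /= => -[] e.
    exact: (eqs _ _ x e erefl).
  by have := eqs _ _ x' (esym e) (or_introl erefl).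
subst x'.
have := memK2 _ _ _ (esym E); rewrite /= => -[] e.
  have yx : y = x by exact: (eqs _ _ y e (or_intror erefl)).
  subst y.
  have := memK2 _ _ _ E; rewrite /= => -[] e'.
    by have := eqs _ _ y' e' (or_intror erefl) => ->.
  by have := eqs _ _ y' e' (or_intror erefl) => -[] ->.
have := eqs _ _ y e (or_intror erefl); rewrite /= => -[] ey; last by rewrite ey.
subst y.
by have := eqs _ _ y' (esym e) (or_intror erefl); rewrite /= => -[] ->.
Qed.


Lemma wf_inj X Y (r : X -> X -> Prop) : well_founded r ->
  (forall x y, x <> y -> r x y \/ r y x) ->
  (forall x, card_lt [set y | r y x] [set: Y]) -> [set: X] #<= [set: Y].
Proof.
move=> wf tot seg.
case: (pselect (exists x : X, True)) => [[x0 _]|nX]; last first.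
  have -> : [set: X] = set0 by apply/seteqP; split => // x _; apply: nX; exists x.
  exact: card_ge0.
have [y0 _] : exists y : Y, True.
  apply: contrapT => nY; apply: (seg x0).2.
  have -> : [set: Y] = set0 by apply/seteqP; split => // y _; apply: nY; exists y.
  exact: card_ge0.
pose F (x : X) (rec : forall z, r z x -> Y) : Y :=
  epsilon (inhabits y0) (fun y => ~ exists z (h : r z x), rec z h = y).
pose f := Fix wf (fun _ => Y) F.
have fE x : f x = epsilon (inhabits y0) (fun y => ~ exists z, r z x /\ f z = y).
  rewrite /f Fix_eq; last first.
    move=> x' g1 g2 e; rewrite /F.
    have -> : g1 = g2 by apply: functional_extensionality_dep => z;
      apply: functional_extensionality_dep => h; exact: e.
    by [].
  rewrite /F; congr (epsilon _ _); apply: functional_extensionality => y.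
  apply: propositional_extensionality; split.
    by move=> nE [z [h e]]; apply: nE; exists z, h.
  by move=> nE [z [h e]]; apply: nE; exists z.
have fP x : ~ exists z, r z x /\ f z = f x.
  rewrite fE.
  apply: (epsilon_spec (inhabits y0) (fun y => ~ exists z, r z x /\ f z = y)).
  apply: contrapT => nE; apply: (seg x).2.
  apply: (@card_le_trans _ _ _ (f @` [set y | r y x])); last exact: card_image_le.
  apply: subset_card_le => y _; apply: contrapT => ny; apply: nE; exists y.
  by move=> [z [rz e]]; apply: ny; exists z.
apply: (@le_of _ _ _ _ f) => // x y _ _ e; apply: contrapT => nxy.
case: (tot _ _ nxy) => h.
  by apply: (fP y); exists x.
by apply: (fP x); exists y.
Qed.


Section Dsec.
Variables (D : Type) (lt : D -> D -> Prop).
Hypothesis wo : initial_wo lt.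
Hypothesis SL : strong_limit [set: D].
Variable d0 : D.

Let wf : well_founded lt. Proof. by case: wo. Qed.
Let irr : forall a, ~ lt a a. Proof. by case: wo. Qed.
Let tr : forall a b c, lt a b -> lt b c -> lt a c. Proof. by case: wo. Qed.
Let tri : forall a b, [\/ lt a b, a = b | lt b a]. Proof. by case: wo. Qed.
Let segc : forall a, card_lt [set b | lt b a] [set: D]. Proof. by case: wo. Qed.

Lemma powD U (Z : set U) : card_lt Z [set: D] -> card_lt [set Y | Y `<=` Z] [set: D].
Proof.
move=> hZ; have [f [fm fi]] := le_inv hZ.1 d0.
have e : f @` Z #= Z.
  by apply: inj_card_eq => x y /set_mem hx /set_mem hy; apply: fi.
have [e1 e2] := (card_eqPle _ _).1 e.
have hZ' : card_lt (f @` Z) [set: D] := le_lt_trans e1 hZ.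
exact: le_lt_trans (pow_le e2) (SL hZ').
Qed.

Definition Qs m := [set x | lt x m \/ x = m].

Lemma Q_lt m : card_lt (Qs m) [set: D].
Proof.
apply: (le_lt_trans _ (SL (segc m))).
apply: (@le_of _ _ _ _ (fun x => [set b | lt b x])).
  move=> x [hx|->] b /= hb //; exact: tr hb hx.
move=> x y _ _ e; apply: contrapT => nxy.
case: (tri x y) => [h|//|h].
  have : [set b | lt b y] x by [].
  by rewrite -e => /irr.
have : [set b | lt b x] y by [].
by rewrite e => /irr.
Qed.

Lemma QQ_lt m : card_lt (Qs m `*` Qs m) [set: D].
Proof. exact: le_lt_trans (kur (Qs m)) (powD (powD (Q_lt m))). Qed.

Definition mx a b := if pselect (lt a b) then b else a.
Definition le' x y := lt x y \/ x = y.

Lemma mx_l a b : le' a (mx a b).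
Proof. by rewrite /mx; case: pselect => h; [left | right]. Qed.

Lemma mx_r a b : le' b (mx a b).
Proof.
rewrite /mx; case: pselect => h /=; first by right.
by case: (tri a b) => [//|->|h']; [right | left].
Qed.

Lemma le'_trans a b c : le' a b -> le' b c -> le' a c.
Proof.
move=> [h1|->] [h2|<-]; [left; exact: tr h1 h2 | by left | by left | by right].
Qed.

Definition gr (p q : D * D) :=
  lt (mx p.1 p.2) (mx q.1 q.2) \/
  (mx p.1 p.2 = mx q.1 q.2 /\ (lt p.1 q.1 \/ (p.1 = q.1 /\ lt p.2 q.2))).

Lemma wf_gr : well_founded gr.
Proof.
suff H : forall m a b, mx a b = m -> Acc gr (a, b) by move=> [a b]; exact: (H _ _ _ erefl).
elim/(well_founded_induction wf) => m IHm.
elim/(well_founded_induction wf) => a IHa.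
elim/(well_founded_induction wf) => b IHb e.
constructor => -[c d] [/= h|[/= h1 [h2|[h2 h3]]]].
- by rewrite e in h; exact: (IHm _ h c d erefl).
- by apply: (IHa c h2 d); rewrite h1.
- subst c; by apply: (IHb d h3); rewrite h1.
Qed.

Lemma tot_gr p q : p <> q -> gr p q \/ gr q p.
Proof.
move: p q => [a b] [c d] ne; rewrite /gr /=.
case: (tri (mx a b) (mx c d)) => [h|e|h].
- by left; left.
- case: (tri a c) => [h|e2|h].
  + by left; right; split => //; left.
  + case: (tri b d) => [h|e3|h].
    * by left; right; split => //; right.
    * by case: ne; rewrite e2 e3.
    * by right; right; split => //; right.
  + by right; right; split => //; left.
- by right; left.
Qed.

Lemma seg_gr q : [set p | gr p q] `<=` Qs (mx q.1 q.2) `*` Qs (mx q.1 q.2).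
Proof.
move=> p hp.
have hm : le' (mx p.1 p.2) (mx q.1 q.2) by case: hp => [h|[h _]]; [left|right].
split; [exact: le'_trans (mx_l _ _) hm | exact: le'_trans (mx_r _ _) hm].
Qed.

Theorem DD : [set: D * D] #<= [set: D].
Proof.
apply: (wf_inj wf_gr tot_gr) => q.
exact: le_lt_trans (subset_card_le (@seg_gr q)) (QQ_lt _).
Qed.

End Dsec.


Lemma powT T : [set Y : set T | Y `<=` setT] = setT.
Proof. by apply/seteqP; split. Qed.

Lemma setXTT T U : [set: T] `*` [set: U] = [set: T * U].
Proof. by apply/seteqP; split. Qed.

Section Arith.
Variables (D : Type) (lt : D -> D -> Prop).
Hypothesis wo : initial_wo lt.
Hypothesis SL : strong_limit [set: D].
Variables d0 d1 : D.
Hypothesis d01 : d0 <> d1.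

Let DDle : [set: D * D] #<= [set: D] := DD wo SL d0.

Lemma union2 T (A B : set T) : A #<= [set: D] -> B #<= [set: D] -> A `|` B #<= [set: D].
Proof.
move=> hA hB.
have [f [_ fi]] := le_inv hA d0; have [g [_ gi]] := le_inv hB d0.
apply: (card_le_trans _ DDle).
apply: (@le_of _ _ _ _ (fun x => if pselect (A x) then (f x, d0) else (g x, d1))) => //.
move=> x y hx hy; case: (pselect (A x)) => ax; case: (pselect (A y)) => ay /= /pair_equal_spec [e1 e2].
- exact: fi e1.
- by case: d01.
- by case: d01.
- by apply: gi e1; [case: hx | case: hy].
Qed.

Lemma SDD : [set: set (D * D)] #<= [set: set D].
Proof. by have := pow_le DDle; rewrite !powT. Qed.

Lemma SDpair : [set: set D * set D] #<= [set: set D].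
Proof.
apply: (card_le_trans _ SDD).
apply: (@le_of _ _ _ _ (fun p => [set z : D * D | (z.2 = d0 /\ p.1 z.1) \/ (z.2 = d1 /\ p.2 z.1)])) => //.
have key (X Y X' Y' : set D) :
   [set z : D * D | (z.2 = d0 /\ X z.1) \/ (z.2 = d1 /\ Y z.1)] =
   [set z : D * D | (z.2 = d0 /\ X' z.1) \/ (z.2 = d1 /\ Y' z.1)] -> X `<=` X' /\ Y `<=` Y'.
  move=> e; split => x hx.
    have : [set z : D * D | (z.2 = d0 /\ X z.1) \/ (z.2 = d1 /\ Y z.1)] (x, d0) by left.
    by rewrite e => -[[_ ?]//|[/d01]].
  have : [set z : D * D | (z.2 = d0 /\ X z.1) \/ (z.2 = d1 /\ Y z.1)] (x, d1) by right.
  by rewrite e => -[[/esym/d01]|[_ ?]].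
move=> [X Y] [X' Y'] _ _ /= e.
have [h1 h2] := key _ _ _ _ e; have [h3 h4] := key _ _ _ _ (esym e).
by congr pair; apply/seteqP; split.
Qed.

Lemma SDfun : [set: D -> set D] #<= [set: set D].
Proof.
apply: (card_le_trans _ SDD).
apply: (@le_of _ _ _ _ (fun h => [set z : D * D | h z.1 z.2])) => //.
move=> h h' _ _ e; apply: functional_extensionality => a.
apply: functional_extensionality => b; apply: propositional_extensionality.
have : ([set z : D * D | h z.1 z.2] (a, b) <-> [set z : D * D | h' z.1 z.2] (a, b)) by rewrite e.
by [].
Qed.

Lemma D_SD : [set: D] #<= [set: set D].
Proof.
apply: (@le_of _ _ _ _ (fun d => [set d])) => // x y _ _ e.
by have : [set x] y by rewrite e.
Qed.

Definition small T (X : set T) := X #<= [set: set D].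

Lemma small_le T U (X : set T) (Y : set U) : X #<= Y -> small Y -> small X.
Proof. exact: card_le_trans. Qed.

Lemma small_sub T (X Y : set T) : X `<=` Y -> small Y -> small X.
Proof. by move=> /subset_card_le; apply: small_le. Qed.

Lemma smallX T U (X : set T) (Y : set U) : small X -> small Y -> small (X `*` Y).
Proof.
move=> hX hY; apply: (card_le_trans _ SDpair).
by have := setX_le hX hY; rewrite setXTT.
Qed.

Lemma smallU T I (J : set I) (F : I -> set T) :
  small J -> (forall i, J i -> small (F i)) -> small (\bigcup_(i in J) F i).
Proof.
move=> hJ hF; apply: small_le (bigcup_le hF) _.
exact: smallX hJ (card_lexx _).
Qed.

Lemma smallD T (X : set T) : X #<= [set: D] -> small X.
Proof. by move=> h; apply: card_le_trans h D_SD. Qed.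

Lemma small_SDD : small [set: set (D * D)].
Proof. exact: SDD. Qed.

Lemma small_pow T (X : set T) : small X ->
  small [set S : set T | S `<=` X /\ S #<= [set: D]].
Proof.
move=> hX.
have [phi [_ phii]] := le_inv hX (@set0 D).
pose e (S : set T) := epsilon (inhabits (fun _ : T => d0))
  (fun e => (forall x, S x -> [set: D] (e x)) /\ (forall x y, S x -> S y -> e x = e y -> x = y)).
have eP S : S #<= [set: D] -> forall x y, S x -> S y -> e S x = e S y -> x = y.
  move=> hS; have [] := epsilon_spec (inhabits (fun _ : T => d0))
  (fun e => (forall x, S x -> [set: D] (e x)) /\ (forall x y, S x -> S y -> e x = e y -> x = y))
  (le_inv hS d0).
  by [].
pose fib (S : set T) (d : D) := [set b | exists x, S x /\ e S x = d /\ phi x b].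
have fibE S x : S #<= [set: D] -> S x -> fib S (e S x) = phi x.
  move=> hS Sx; apply/seteqP; split => b.
    by move=> [y [Sy [hyx hb]]]; rewrite -(eP _ hS _ _ Sy Sx hyx).
  by move=> hb; exists x.
have char S : S `<=` X -> S #<= [set: D] ->
    S = [set x | X x /\ exists d, (e S @` S) d /\ fib S d = phi x].
  move=> SX hS; apply/seteqP; split => x.
    move=> Sx; split; first exact: SX.
    by exists (e S x); split; [exists x | exact: fibE].
  move=> [Xx [d [[y Sy <-] hf]]].
  rewrite fibE // in hf.
  by rewrite -(phii _ _ (SX _ Sy) Xx hf).
apply: small_le (smallX (card_lexx [set: set D]) SDfun).
apply: (@le_of _ _ _ _ (fun S => (e S @` S, fib S))) => //.
move=> S S' [SX hS] [SX' hS'] [e1 e2].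
by rewrite (char _ SX hS) (char _ SX' hS') e1 e2.
Qed.

End Arith.


Lemma wo_exists (T : Type) : exists s : T -> T -> Prop,
  [/\ well_founded s, (forall x, ~ s x x), (forall x y z, s x y -> s y z -> s x z)
    & (forall x y, x <> y -> s x y \/ s y x)].
Proof.
have [R wR] := well_ordering_principle {classic T}.
have minR (S : set T) : (exists x, S x) -> exists m, S m /\ forall y, S y -> R m y.
  move=> [x Sx].
  have ne : nonempty (fun x : {classic T} => `[< S x >]).
    by exists x; apply/asboolP.
  have [m [[hm lb] _]] := wR _ ne.
  exists m; split; first by move: hm => /asboolP.
  by move=> y Sy; apply: lb; apply/asboolP.
have uniqR (S : set T) m m' : S m -> S m' -> (forall y, S y -> R m y) -> (forall y, S y -> R m' y) -> m = m'.
  move=> Sm Sm' lm lm'.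
  have ne : nonempty (fun x : {classic T} => `[< S x >]).
    by exists m; apply/asboolP.
  have [z [_ zu]] := wR _ ne.
  have P1 : minimum_of R (fun x : {classic T} => `[< S x >]) m.
    split; first by apply/asboolP.
    by move=> y; move=> /asboolP; apply: lm.
  have P2 : minimum_of R (fun x : {classic T} => `[< S x >]) m'.
    split; first by apply/asboolP.
    by move=> y; move=> /asboolP; apply: lm'.
  by rewrite -(zu _ P1) -(zu _ P2).
have reflR x : R x x.
  by have [m [-> lb]] := minR [set x] (ex_intro _ x erefl); apply: lb.
have antiR x y : R x y -> R y x -> x = y.
  move=> hxy hyx; apply: (uniqR [set x; y]); [by left | by right | | ].
    by move=> z [->|->].
  by move=> z [->|->].
have totR x y : R x y \/ R y x.
  have [m [[->|->] lb]] := minR [set x; y] (ex_intro _ x (or_introl erefl)).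
    by left; apply: lb; right.
  by right; apply: lb; left.
have trR x y z : R x y -> R y z -> R x z.
  move=> hxy hyz.
  have [m [Sm lb]] := minR [set x; y; z] (ex_intro _ x (or_introl (or_introl erefl))).
  case: Sm => [[e|e]|e]; rewrite e in lb.
  - by apply: lb; right.
  - have e2 := antiR _ _ hxy (lb x (or_introl (or_introl erefl))).
    by rewrite e2.
  - have e2 := antiR _ _ hyz (lb y (or_introl (or_intror erefl))).
    by rewrite -e2.
exists (fun x y => R x y /\ x <> y); split.
- move=> x0; apply: contrapT => nA.
  have [m [Sm lb]] := minR [set x | ~ Acc (fun x y => R x y /\ x <> y) x] (ex_intro _ x0 nA).
  apply: Sm; constructor => y [hym nym]; apply: contrapT => nAy.
  by apply: nym; apply: antiR hym (lb _ nAy).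
- by move=> x [_].
- move=> x y z [hxy nxy] [hyz nyz]; split; first exact: trR hxy hyz.
  by move=> exz; subst z; apply: nxy; apply: antiR.
- move=> x y nxy; case: (totR x y) => h; [left | right]; split => //.
  by move=> e; apply: nxy.
Qed.


Section Compat.
Variables (D L : Type) (lt : D -> D -> Prop).
Hypothesis wo : initial_wo lt.
Hypothesis SL : strong_limit [set: D].
Variables d0 d1 : D.
Hypothesis d01 : d0 <> d1.

Lemma set0_ltD T : card_lt (@set0 T) [set: D].
Proof.
split; first exact: card_ge0.
by move/card_le0P => e; have : [set: D] d0 by []; rewrite e.
Qed.

Lemma compat (p q : Kcond D L) : Kcond_ok p -> Kcond_ok q -> Kalpha p = Kalpha q ->
  (forall i, Kw p i -> Kw q i -> forall b, lt b (Kalpha p) -> Kr p i b = Kr q i b) ->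
  Kcompat lt p q.
Proof.
rewrite /Kcond_ok => okp okq ea agr.
have [p1 p2] := (card_eqPle _ _).1 okp; have [q1 q2] := (card_eqPle _ _).1 okq.
exists (MkK (Kw p `|` Kw q) (Kalpha p) (fun i b => if pselect (Kw p i) then Kr p i b else Kr q i b)).
split; [|split].
- rewrite /Kcond_ok /=; apply/card_eqPle; split.
    by have := union2 wo SL d01 p1 q1.
  apply: (card_le_trans p2); apply: subset_card_le => i h; by left.
- split => /=.
  + by move=> i h; left.
  + by right.
  + by move=> i hi b _; case: pselect.
  + set Z := (X in card_lt X _).
    have -> : Z = set0 by apply/seteqP; split => // i [_ [b [h1 [h2 _]]]].
    exact: set0_ltD.
- split => /=.
  + by move=> i h; right.
  + by rewrite ea; right.
  + move=> i hi b hb; case: pselect => //= hp.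
    by rewrite agr // ea.
  + set Z := (X in card_lt X _).
    have -> : Z = set0 by apply/seteqP; split => // i [_ [b [h1 [h2 _]]]]; apply: h1; rewrite -ea.
    exact: set0_ltD.
Qed.

End Compat.


Section Main.
Variables (D L P : Type) (lt : D -> D -> Prop).
Hypothesis wo : initial_wo lt.
Hypothesis SL : strong_limit [set: D].
Variables d0 d1 : D.
Hypothesis d01 : d0 <> d1.
Hypothesis hP : [set: set D] #= [set: P].
Hypothesis DP : card_lt [set: D] [set: P].
Variable s : P -> P -> Prop.
Hypothesis swf : well_founded s.
Hypothesis sirr : forall x, ~ s x x.
Hypothesis strans : forall x y z, s x y -> s y z -> s x z.
Hypothesis stot : forall x y, x <> y -> s x y \/ s y x.

Let DDle : [set: D * D] #<= [set: D] := DD wo SL d0.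
Let smallP : small D [set: P] := ((card_eqPle _ _).1 hP).2.
Let sU := smallU wo SL d01.
Let sX := smallX wo SL d01.
Let sPow := small_pow wo SL d01.
Let sSDD := small_SDD wo SL d0.
Let sD T (X : set T) : X #<= [set: D] -> small D X := @smallD D T X.

Lemma smallU2 T (X Y : set T) : small D X -> small D Y -> small D (X `|` Y).
Proof.
move=> hX hY.
have -> : X `|` Y = \bigcup_(b in [set: bool]) (if b then X else Y).
  apply/seteqP; split => x.
    by case=> h; [exists true | exists false].
  by move=> [[] _ h]; [left | right].
apply: sU; last by case.
rewrite /small; apply: (@le_of _ _ _ _ (fun b : bool => if b then [set: D] else set0)) => // b b' _ _.
case: b; case: b' => // e.
- by have : [set: D] d0 by []; rewrite e.
- by have : [set: D] d0 by []; rewrite -e.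
Qed.

Lemma le1D T (x : T) : [set x] #<= [set: D].
Proof. by apply: (@le_of _ _ _ _ (fun _ => d0)) => // a b -> ->. Qed.

Definition segP x := [set y | s y x].
Definition P' := [set x | segP x #<= [set: D]].

Lemma s_min (S : set P) : (exists x, S x) -> exists m, S m /\ forall y, s y m -> ~ S y.
Proof.
move=> [x Sx]; apply: contrapT => nm.
suff : forall y, ~ S y by move/(_ x).
move=> y; elim/(well_founded_induction swf): y => y IH Sy.
by apply: nm; exists y; split => // z /IH.
Qed.

Lemma P'_down x y : P' x -> s y x -> P' y.
Proof.
move=> hx syx; apply: card_le_trans hx; apply: subset_card_le => z szy.
exact: strans szy syx.
Qed.

Lemma P'_not : ~ (P' #<= [set: D]).
Proof.
move=> h; case: (pselect (exists y, ~ P' y)) => [ex|nex].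
  have [m [nPm lb]] := s_min ex; apply: nPm.
  apply: card_le_trans h; apply: subset_card_le => z szm.
  by apply: contrapT; apply: lb.
apply: DP.2; apply: card_le_trans h; apply: subset_card_le => z _.
by apply: contrapT => nz; apply: nex; exists z.
Qed.

Lemma cof (X : set P) : X `<=` P' -> X #<= [set: D] ->
  exists z, P' z /\ forall x, X x -> s x z.
Proof.
move=> XP hX; apply: contrapT => nz; apply: P'_not.
have sub : P' `<=` \bigcup_(x in X) (segP x `|` [set x]).
  move=> y Py; apply: contrapT => ny; apply: nz; exists y; split => // x Xx.
  apply: contrapT => nxy; apply: ny; exists x => //.
  case: (pselect (x = y)) => [->|ne]; first by right.
  by case: (stot ne) => // h; left.
apply: card_le_trans (subset_card_le sub) _.
apply: card_le_trans (bigcup_le (B := [set: D]) _) _.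
  move=> x Xx; have hx : segP x #<= [set: D] := XP _ Xx; exact: (union2 wo SL d01 hx (le1D x)).
apply: card_le_trans DDle; rewrite -setXTT; exact: setX_le.
Qed.

Variable A : set (Kcond D L).
Hypothesis hA : Kantichain lt A.

Definition k0 : Kcond D L := MkK set0 d0 (fun _ _ => false).

Definition eqv (S : set L) (p q : Kcond D L) :=
  Kalpha p = Kalpha q /\ forall i, S i -> forall b, lt b (Kalpha p) -> Kr p i b = Kr q i b.

Lemma eqv_sym S p q : eqv S p q -> eqv S q p.
Proof. by move=> [e h]; split => // i Si b hb; rewrite h // e. Qed.

Lemma eqv_trans S p q r : eqv S p q -> eqv S q r -> eqv S p r.
Proof. by move=> [e h] [e' h']; split; [rewrite e | move=> i Si b hb; rewrite h // h' // -e]. Qed.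

Definition repP S q p := A p /\ S `<=` Kw p /\ eqv S p q.
Definition rep S q := epsilon (inhabits k0) (repP S q).

Lemma rep_spec S q : A q -> S `<=` Kw q -> repP S q (rep S q).
Proof.
move=> Aq Sq; apply: epsilon_spec; exists q; split => //; split => //.
Qed.

Lemma rep_eq S q q' : eqv S q q' -> rep S q = rep S q'.
Proof.
move=> e; rewrite /rep; congr (epsilon _ _).
apply: functional_extensionality => p; apply: propositional_extensionality.
rewrite /repP; split => -[Ap [Sp ep]]; split => //; split => //.
  exact: eqv_trans ep e.
exact: eqv_trans ep (eqv_sym e).
Qed.

Definition eW (W : set L) := epsilon (inhabits (fun _ : L => d0))
  (fun e => (forall x, W x -> [set: D] (e x)) /\ (forall x y, W x -> W y -> e x = e y -> x = y)).

Lemma eW_inj W : W #<= [set: D] -> forall x y, W x -> W y -> eW W x = eW W y -> x = y.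
Proof.
move=> hW; have [] := epsilon_spec (inhabits (fun _ : L => d0))
  (fun e => (forall x, W x -> [set: D] (e x)) /\ (forall x y, W x -> W y -> e x = e y -> x = y))
  (le_inv hW d0).
by [].
Qed.

Definition code (W : set L) (p : Kcond D L) :=
  (Kalpha p, [set z : D * D | exists i, W i /\ eW W i = z.1 /\ lt z.2 (Kalpha p) /\ Kr p i z.2]).

Lemma code_eqv W p q : W #<= [set: D] -> code W p = code W q -> eqv W p q.
Proof.
move=> hW [e1 e2]; split => // i Wi b hb.
have key (r : Kcond D L) : lt b (Kalpha r) ->
    (Kr r i b = true <-> [set z : D * D | exists i, W i /\ eW W i = z.1 /\ lt z.2 (Kalpha r) /\ Kr r i z.2] (eW W i, b)).
  move=> hr; split; first by move=> h; exists i.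
  by move=> [j [Wj [/(eW_inj hW Wj Wi) -> [_ ->]]]].
have hb' : lt b (Kalpha q) by rewrite -e1.
apply/idP/idP => h.
  by apply/(key q hb'); rewrite -e2; apply/(key p hb).
by apply/(key p hb); rewrite e2; apply/(key q hb').
Qed.

Definition Reps S := [set p | exists q, A q /\ S `<=` Kw q /\ p = rep S q].

Lemma Ap_le p : A p -> Kw p #<= [set: D].
Proof. by move=> Ap; have := hA.1 _ Ap; rewrite /Kcond_ok => /card_eqPle []. Qed.

Lemma Reps_small S : S #<= [set: D] -> small D (Reps S).
Proof.
move=> hS.
apply: small_le (sX (sD (card_lexx [set: D])) sSDD).
  apply: (@le_of _ _ _ _ (code S)) => //.
  move=> p p' [q [Aq [Sq ->]]] [q' [Aq' [Sq' ->]]] e.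
  have [_ [_ e1]] := rep_spec Aq Sq; have [_ [_ e2]] := rep_spec Aq' Sq'.
  apply: rep_eq; apply: eqv_trans (eqv_sym e1) _; apply: eqv_trans _ e2.
  exact: code_eqv hS e.
Qed.

Definition Cl S := \bigcup_(p in Reps S) Kw p.

Lemma Cl_small S : S #<= [set: D] -> small D (Cl S).
Proof.
move=> hS; apply: sU; first exact: Reps_small.
by move=> p [q [Aq [Sq ->]]]; apply: sD; apply: Ap_le; have [] := rep_spec Aq Sq.
Qed.

Definition Cstar (X : set L) :=
  X `|` \bigcup_(S in [set S : set L | S `<=` X /\ S #<= [set: D]]) Cl S.

Lemma Cstar_mono X Y : X `<=` Y -> Cstar X `<=` Cstar Y.
Proof.
move=> XY l [h|[S [SX hS] h]]; first by left; apply: XY.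
right; exists S => //; split => //; exact: subset_trans XY.
Qed.

Lemma Cstar_small X : small D X -> small D (Cstar X).
Proof.
move=> hX; apply: smallU2 => //; apply: sU; first exact: sPow.
by move=> S [_ hS]; apply: Cl_small.
Qed.

Definition closedF (G : P -> set L) := forall x y, s x y -> Cstar (G x) `<=` G y.

Definition F (y : P) := [set l | forall G, closedF G -> G y l].

Lemma F_closed : closedF F.
Proof.
move=> x y sxy l hl G cG; apply: (cG _ _ sxy).
by apply: Cstar_mono hl => l' hl'; apply: hl'.
Qed.

Lemma F_sub y : F y `<=` \bigcup_(x in segP y) Cstar (F x).
Proof.
pose G z := if pselect (z = y) then \bigcup_(x in segP y) Cstar (F x) else F z.
have GF z : G z `<=` F z.
  rewrite /G; case: pselect => [ez|nz] /=; last by [].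
  rewrite ez => l [x sxy hl].
  exact: F_closed sxy _ hl.
have cG : closedF G.
  move=> x z sxz.
  rewrite {2}/G; case: pselect => [ez|nz] /=.
    have nx : x <> y by move=> exy; subst; exact: sirr sxz.
    rewrite /G; case: pselect => //= _ l hl; exists x; first by rewrite -ez.
    exact: hl.
  apply: subset_trans (F_closed sxz).
  exact: Cstar_mono (GF x).
move=> l /(_ G cG); rewrite /G; case: pselect => //=.
Qed.

Lemma F_small y : P' y -> small D (F y).
Proof.
elim/(well_founded_induction swf): y => y IH Py.
apply: small_sub (@F_sub y) _; apply: sU.
  exact: sD Py.
move=> x sxy; apply: Cstar_small; apply: IH => //; exact: P'_down Py sxy.
Qed.

Definition N := \bigcup_(y in P') F y.

Lemma N_small : small D N.
Proof.
apply: sU; last by move=> y Py; apply: F_small.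
exact: small_sub smallP.
Qed.

Lemma N_closed S : S `<=` N -> S #<= [set: D] -> Cl S `<=` N.
Proof.
move=> SN hS.
have [y0 Py0] : exists y, P' y.
  apply: contrapT => nP; apply: P'_not.
  have -> : P' = set0 by apply/seteqP; split => // y Py; apply: nP; exists y.
  exact: card_ge0.
pose xi i := epsilon (inhabits y0) (fun y => P' y /\ F y i).
have xiP i : S i -> P' (xi i) /\ F (xi i) i.
  move=> Si; have [y Py Fy] := SN _ Si.
  exact: (epsilon_spec (inhabits y0) (fun y => P' y /\ F y i) (ex_intro _ y (conj Py Fy))).
have [z [Pz hz]] : exists z, P' z /\ forall x, (xi @` S) x -> s x z.
  apply: cof; first by move=> _ [i Si <-]; exact: (xiP _ Si).1.
  exact: card_le_trans (card_image_le _ _) hS.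
have SFz : S `<=` F z.
  move=> i Si; apply: (F_closed (hz _ (ex_intro2 _ _ i Si erefl))).
  by left; exact: (xiP _ Si).2.
have [z' [Pz' hz']] : exists z', P' z' /\ forall x, [set z] x -> s x z'.
  apply: cof; first by move=> _ ->.
  exact: le1D.
move=> l hl; exists z' => //.
apply: (F_closed (hz' _ erefl)); right; exists S => //.
Qed.

Lemma allN q : A q -> Kw q `<=` N.
Proof.
move=> Aq.
pose S := Kw q `&` N.
have SN : S `<=` N by move=> i [].
have Sq : S `<=` Kw q by move=> i [].
have hS : S #<= [set: D] := card_le_trans (subset_card_le Sq) (Ap_le Aq).
have [Ap [Sp ep]] := rep_spec Aq Sq.
have pN : Kw (rep S q) `<=` N.
  move=> l hl; apply: (N_closed SN hS); exists (rep S q) => //.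
  by exists q.
have cpq : Kcompat lt (rep S q) q.
  apply: (compat wo SL d01 (hA.1 _ Ap) (hA.1 _ Aq) ep.1).
  move=> i hp hq b hb; apply: ep.2 => //; split => //; exact: pN.
case: (pselect (rep S q = q)) => [e|ne]; last by case: (hA.2 _ _ Ap Aq ne cpq).
by rewrite -e.
Qed.

Theorem main_bound : A #<= [set: P].
Proof.
apply: (card_le_trans _ ((card_eqPle _ _).1 hP).1).
apply: small_le (sX (sPow N_small) (sX (sD (card_lexx [set: D])) sSDD)).
apply: (@le_of _ _ _ _ (fun q => (Kw q, code (Kw q) q))).
  by move=> q Aq; split => //=; split; [exact: allN | exact: Ap_le].
move=> q q' Aq Aq' /pair_equal_spec [e1 e2].
rewrite e1 in e2.
have ev := code_eqv (Ap_le Aq') e2.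
have cqq : Kcompat lt q q'.
  apply: (compat wo SL d01 (hA.1 _ Aq) (hA.1 _ Aq') ev.1).
  by move=> i hq hq' b hb; apply: ev.2.
by apply: contrapT => ne; apply: (hA.2 _ _ Aq Aq' ne cqq).
Qed.

End Main.


Unset Implicit Arguments.
Set Strict Implicit.

Theorem lemma5 (D L P : Type) (lt : D -> D -> Prop) :
  initial_wo lt ->
  regular_card [set: D] -> regular_card [set: L] ->
  card_lt [set: D] [set: L] ->
  is_succ_card [set: D] [set: P] ->
  card_lt [set: P] [set: L] ->
  inaccessible [set: D] ->
  (inaccessible [set: L] \/
   exists (M : Type), is_succ_card [set: M] [set: L] /\ cf_gt [set: M] [set: D]) ->
  [set: set D] #= [set: P] ->
  forall A : set (Kcond D L), Kantichain lt A -> A #<= [set: P].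
Proof.
move=> wo _ _ _ [DP _] _ [ncD [_ SL]] _ hP A hA.
have [d0 _] : exists d : D, True.
  apply: contrapT => nD; apply: ncD.
  have -> : [set: D] = set0 by apply/seteqP; split => // d _; apply: nD; exists d.
  exact: card_ge0.
have [d1 d01] : exists d : D, d0 <> d.
  apply: contrapT => nd; apply: ncD.
  apply: (@le_of _ _ _ _ (fun _ => 0%N)) => // x y _ _ _.
  have ex : x = d0 by apply: contrapT => h; apply: nd; exists x => e; apply: h.
  have ey : y = d0 by apply: contrapT => h; apply: nd; exists y => e; apply: h.
  by rewrite ex ey.
have [s [swf sirr strans stot]] := wo_exists P.
exact: (main_bound wo SL d01 hP DP swf sirr strans stot hA).
Qed.
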